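(* (a) Let $\Gamma$ be a perfect matching drawing containing vertices $x,p,q,y$ with matching edges $xp$ and $qy$, where $p$ and $q$ are joined by exactly two non-matching edges which together bound a disk whose interior meets no other part of $\Gamma$, all of this lying in a disk $D$ that meets $\Gamma$ only in these vertices and edges and initial segments of the two other edges at $x$ and of the two other edges at $y$. Let $\Gamma'$ be obtained by replacing, inside $D$, the vertices $p,q$, the two edges between them and the matching edges $xp,qy$ by a single matching edge $xy$. Then $$\langle\Gamma\rangle_2(1)=2\,\langle\Gamma'\rangle_2(1).$$ (b) If $G$ is a planar trivalent graph with perfect matching $M$ containing such a configuration in a plane embedding, and $(G',M')$ is obtained by the same replacement, then $|G:M|_2=2\,|G':M'|_2$.
   Context: Graphs are finite and may have multiple edges; trivalent means every vertex has degree $3$. $|G:M|_2$ denotes the number of $2$-factors (spanning subgraphs in which every vertex has degree $2$) of $G$ that contain every edge of $M$. A perfect matching drawing $\Gamma$ is a collection of trivalent vertices, edges and vertex-free closed curves drawn in the $2$-sphere by a generic immersion (transverse double points away from vertices, carrying no extra data), together with a set $M$ of edges forming a perfect matching of the vertices. For a matching edge $e=uv$ with other edge-ends $\alpha,\beta$ at $u$ and $\gamma,\delta$ at $v$ in cyclic order $\alpha,\beta,\delta,\gamma$ around a small disk about $e$, the $0$-resolution deletes $e,u,v$ and joins $\alpha$–$\gamma$ and $\beta$–$\delta$ by disjoint arcs, and the $1$-resolution joins $\alpha$–$\delta$ and $\beta$–$\gamma$ by two arcs crossing once. For a state $s:M\to\{0,1\}$, resolving every matching edge gives $c(s)$ immersed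 closed curves, and the $2$-factor bracket is $\langle\Gamma\rangle_2(z)=\sum_s(-z)^{|s|}(z+z^{-1})^{c(s)}\in\mathbb{Z}[z,z^{-1}]$, $|s|$ being the number of edges assigned $1$. *)

(* Defs.v *)
From mathcomp Require Import all_boot all_order all_algebra.
Set Implicit Arguments. Unset Strict Implicit. Unset Printing Implicit Defensive.
Import Order.TTheory GRing.Theory Num.Theory.

(* A perfect matching drawing, recorded by the data that the 2-factor bracket
   depends on: a trivalent multigraph given by darts (half-edges), the cyclic
   order (rotation, counterclockwise w.r.t. a fixed orientation of the sphere)
   of the three edge-ends at each vertex, the matching M, and the number of
   vertex-free closed curves.  Crossings carry no data and are omitted. *)
Record pmd (H V : finType) := Pmd {
  darts : {set H};
  opp : H -> H;
  rot : H -> H;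
  vtx : H -> V;
  matched : pred H;
  loops : nat
}.

Definition pmd_wf (H V : finType) (G : pmd H V) : Prop :=
  forall h, h \in darts G ->
    [/\ opp G h \in darts G, opp G (opp G h) = h & opp G h != h] /\
    [/\ rot G h \in darts G, vtx G (rot G h) = vtx G h, rot G h != h,
        rot G (rot G (rot G h)) = h &
        (forall h', h' \in darts G -> vtx G h' = vtx G h ->
            h' \in [:: h; rot G h; rot G (rot G h)])] /\
    (matched G (opp G h) = matched G h /\
     count (matched G) [:: h; rot G h; rot G (rot G h)] = 1%N).

(* States: sets of matched darts closed under opp (= sets of matching edges
   assigned 1). *)
Definition states (H V : finType) (G : pmd H V) : {set {set H}} :=
  [set S : {set H} | (S \subset [set h in darts G | matched G h])
                     && [forall h in S, opp G h \in S]].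

(* Resolution of the matching edge at the vertex of a non-matched dart h.
   With m the matched dart at that vertex, the disk ends are
   alpha = rot m, beta = rot^2 m, delta = rot (opp m), gamma = rot^2 (opp m).
   0-resolution: alpha-gamma, beta-delta; 1-resolution: alpha-delta, beta-gamma. *)
Definition link (H V : finType) (G : pmd H V) (S : {set H}) (h : H) : H :=
  if matched G (rot G h) then
    let m := rot G h in (* h = beta *)
    if m \in S then rot G (rot G (opp G m)) else rot G (opp G m)
  else
    let m := rot G (rot G h) in (* h = alpha *)
    if m \in S then rot G (opp G m) else rot G (rot G (opp G m)).

Definition nmdarts (H V : finType) (G : pmd H V) : {set H} :=
  [set h in darts G | ~~ matched G h].

Definition curve_rel (H V : finType) (G : pmd H V) (S : {set H}) : rel H :=
  fun a b => [&& a \in nmdarts G, b \in nmdarts G &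
     [|| b == opp G a, a == opp G b, b == link G S a | a == link G S b]].

(* c(s): number of immersed closed curves after resolving every matching edge *)
Definition ncurves (H V : finType) (G : pmd H V) (S : {set H}) : nat :=
  (loops G + n_comp (curve_rel G S) (mem (nmdarts G)))%N.

Local Open Scope ring_scope.
Definition bracket2 (R : fieldType) (H V : finType) (G : pmd H V) (z : R) : R :=
  \sum_(S in states G) (- z) ^+ (#|S| %/ 2) * (z + z^-1) ^+ ncurves G S.
Local Close Scope ring_scope.

Definition twofactors (H V : finType) (G : pmd H V) : {set {set H}} :=
  [set F : {set H} | [&& F \subset darts G, [forall h in F, opp G h \in F],
     [forall h in darts G, matched G h ==> (h \in F)] &
     [forall h in darts G, #|[set h' in F | vtx G h' == vtx G h]| == 2]]].

Definition n2f (H V : finType) (G : pmd H V) : nat := #|twofactors G|.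

(* Plane embedding: the rotation system has genus 0, i.e. Euler's formula
   V - E + F = 2 * (#components) holds, faces being orbits of rot \o opp. *)
Definition face_rel (H V : finType) (G : pmd H V) : rel H :=
  fun a b => [&& a \in darts G, b \in darts G &
                 (b == rot G (opp G a)) || (a == rot G (opp G b))].
Definition comp_rel (H V : finType) (G : pmd H V) : rel H :=
  fun a b => [&& a \in darts G, b \in darts G &
                 (b == opp G a) || (vtx G a == vtx G b)].
Definition plane (H V : finType) (G : pmd H V) : Prop :=
  (#|vtx G @: darts G| + n_comp (face_rel G) (mem (darts G)) =
   #|darts G| %/ 2 + 2 * n_comp (comp_rel G) (mem (darts G)))%N.

(* The configuration: hx is the matched dart at x of the matching edge xp,
   hq the matched dart at q of the matching edge qy; x,p,q,y distinct; the two
   non-matching edges at p go to q and bound an empty disk (planar bigon: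
   upper end at p joined to upper end at q, lower to lower). *)
Definition bigon_config (H V : finType) (G : pmd H V) (hx hq : H) : Prop :=
  let hp := opp G hx in let hy := opp G hq in
  [/\ hx \in darts G, hq \in darts G, matched G hx & matched G hq] /\
  [/\ uniq [:: vtx G hx; vtx G hp; vtx G hq; vtx G hy],
      opp G (rot G (rot G hp)) = rot G hq
    & opp G (rot G hp) = rot G (rot G hq)].

(* Gamma': delete p, q, the bigon and xp, qy, and add the matching edge xy. *)
Definition replace_bigon (H V : finType) (G : pmd H V) (hx hq : H) : pmd H V :=
  let hp := opp G hx in let hy := opp G hq in
  Pmd (darts G :\: [set hp; rot G hp; rot G (rot G hp);
                        hq; rot G hq; rot G (rot G hq)])
      (fun h => if h == hx then hy else if h == hy then hx else opp G h)
      (rot G) (vtx G) (matched G) (loops G).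

(* Main.v *)
Require Import Defs.
From mathcomp Require Import all_boot all_order all_algebra.
Import GRing.Theory.
Import Defs.
Set Implicit Arguments. Unset Strict Implicit. Unset Printing Implicit Defensive.

Lemma statesP (H V : finType) (G : pmd H V) (S : {set H}) :
  reflect ((forall h, h \in S -> (h \in darts G) && matched G h) /\
           (forall h, h \in S -> opp G h \in S)) (S \in states G).
Proof.
rewrite inE; apply: (iffP andP) => [[/subsetP s /forall_inP c]|[s c]].
  by split=> // h /s; rewrite inE.
by split; [apply/subsetP => h /s; rewrite inE | apply/forall_inP].
Qed.

Lemma n_comp_proj (T : finType) (e e' : rel T) (a a' : {pred T}) (pi : T -> T) :
  connect_sym e -> connect_sym e' -> closed e a -> closed e' a' ->
  {subset a' <= a} ->
  (forall u v, e u v -> connect e' (pi u) (pi v)) ->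
  (forall u v, e' u v -> connect e u v) ->
  (forall x, x \in a' -> pi x = x) ->
  (forall x, x \in a -> pi x \in a' /\ connect e x (pi x)) ->
  n_comp e a = n_comp e' a'.
Proof.
move=> se se' cla cla' sub fwd bwd pid pia.
have Cf x y : connect e x y -> connect e' (pi x) (pi y).
  move=> /connectP[p ep ->]; elim: p x ep => //= z p IH x /andP[exz /IH].
  exact: connect_trans (fwd _ _ exz).
have Cb : subrel (connect e') (connect e) by apply: connect_sub.
have Ceq x y : x \in a' -> y \in a' -> connect e x y = connect e' x y.
  move=> xa ya; apply/idP/idP; last exact: Cb.
  by move/Cf; rewrite !pid.
rewrite /n_comp_mem.
have inj : {in predI (roots e') (mem a') &, injective (fingraph.root e)}.
  move=> x y /andP[rx xa] /andP[ry ya] /(fingraph.rootP se).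
  rewrite Ceq // => /(fingraph.rootP se') ; by rewrite (eqP rx) (eqP ry).
rewrite -(card_in_imset inj); apply: eq_card => r. rewrite !inE; apply/idP/imsetP; last first.
  case=> x /andP[rx xa] ->; apply/andP; split; first exact: roots_root.
  by rewrite -(closed_connect cla (connect_root e x)) sub.
case/andP=> rr ra; have [pa cr] := pia r ra.
set z := fingraph.root e' (pi r).
have za : z \in a' by rewrite /z -(closed_connect cla' (connect_root e' (pi r))).
exists z; first by apply/andP; split => //; apply: roots_root.
apply/esym; rewrite -(eqP rr); apply/(fingraph.rootP se).
rewrite se; apply: connect_trans cr _; rewrite Ceq //; exact: connect_root.
Qed.

Lemma curve_sym (H V : finType) (G : pmd H V) (S : {set H}) : symmetric (curve_rel G S).
Proof.
move=> x y; rewrite /curve_rel.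
by apply/idP/idP => /and3P[-> -> /or4P[]->]; rewrite ?orbT.
Qed.

Lemma statesN0 (H V : finType) (G : pmd H V) (S : {set H}) d :
  S \in states G -> matched G d = false -> (d \in S) = false.
Proof. by case/statesP => sm _ md; apply/negP => /sm; rewrite md andbF. Qed.

Lemma card_inter (T : finType) (A : {set T}) (s : seq T) :
  uniq s -> #|A :&: [set x in s]| = count (mem A) s.
Proof.
move=> us; have -> : A :&: [set x in s] = [set x in filter (mem A) s].
  by apply/setP => x; rewrite !inE mem_filter andbC.
by rewrite cardsE; move/card_uniqP: (filter_uniq (mem A) us) => ->; rewrite size_filter.
Qed.

Lemma tfP (H V : finType) (G : pmd H V) (F : {set H}) :
  reflect [/\ {subset F <= darts G}, (forall h, h \in F -> opp G h \in F),
     (forall h, h \in darts G -> matched G h -> h \in F) &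
     (forall h, h \in darts G -> #|[set h' in F | vtx G h' == vtx G h]| = 2)]
   (F \in twofactors G).
Proof.
rewrite inE; apply: (iffP and4P) => [[/subsetP s /forall_inP c /forall_inP m /forall_inP k]|[s c m k]].
  split => // h hd; [exact: (implyP (m h hd))|exact/eqP/k].
split; first exact/subsetP.
- exact/forall_inP.
- by apply/forall_inP => h hd; apply/implyP; apply: m.
- by apply/forall_inP => h hd; apply/eqP; apply: k.
Qed.

Section Basic.
Variables (H V : finType) (G : pmd H V) (hx hq : H).
Hypothesis wf : pmd_wf G.
Hypothesis cfg : bigon_config G hx hq.

Lemma opp_in h : h \in darts G -> opp G h \in darts G.
Proof. by case/wf => -[]. Qed.
Lemma oppK h : h \in darts G -> opp G (opp G h) = h.
Proof. by case/wf => -[]. Qed.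
Lemma rot_in h : h \in darts G -> rot G h \in darts G.
Proof. by case/wf => _ [] []. Qed.
Lemma vtx_rot h : h \in darts G -> vtx G (rot G h) = vtx G h.
Proof. by case/wf => _ [] []. Qed.
Lemma rot3 h : h \in darts G -> rot G (rot G (rot G h)) = h.
Proof. by case/wf => _ [] []. Qed.
Lemma rot_neq h : h \in darts G -> (rot G h == h) = false.
Proof. by case/wf => _ [] [] _ _ /negbTE. Qed.
Lemma at_vertex h h' : h \in darts G -> h' \in darts G -> vtx G h' = vtx G h ->
  [\/ h' = h, h' = rot G h | h' = rot G (rot G h)].
Proof.
move=> hd h'd ev; case: (wf hd) => _ [] [] _ _ _ _ H1 _.
move: (H1 h' h'd ev); rewrite !inE.
by case/or3P => /eqP; [constructor 1|constructor 2|constructor 3].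
Qed.
Lemma matched_opp h : h \in darts G -> matched G (opp G h) = matched G h.
Proof. by case/wf => _ [] _ []. Qed.
Lemma count1 h : h \in darts G ->
  (matched G h + matched G (rot G h) + matched G (rot G (rot G h)) = 1)%N.
Proof. by case/wf => _ [] _ [] _; rewrite /= addn0 addnA. Qed.
Lemma matched_rot h : h \in darts G -> matched G h ->
  matched G (rot G h) = false /\ matched G (rot G (rot G h)) = false.
Proof.
move=> hd hm; have := count1 hd; rewrite hm.
by case: (matched G (rot G h)); case: (matched G (rot G (rot G h))).
Qed.
Lemma rot2_neq h : h \in darts G -> (rot G (rot G h) == h) = false.
Proof.
move=> hd; apply/negbTE/eqP => E; have := rot3 hd; rewrite E => E2.
by have := rot_neq hd; rewrite E2 eqxx.
Qed.
Lemma rot21_neq h : h \in darts G -> (rot G (rot G h) == rot G h) = false.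
Proof. by move=> hd; apply: rot_neq; apply: rot_in. Qed.


Local Notation hp := (opp G hx).
Local Notation hy := (opp G hq).

Lemma cfg1 : [/\ hx \in darts G, hq \in darts G, matched G hx & matched G hq].
Proof. by case: cfg. Qed.
Lemma uq : uniq [:: vtx G hx; vtx G hp; vtx G hq; vtx G hy].
Proof. by case: cfg => _ []. Qed.
Lemma bg1 : opp G (rot G (rot G hp)) = rot G hq.
Proof. by case: cfg => _ []. Qed.
Lemma bg2 : opp G (rot G hp) = rot G (rot G hq).
Proof. by case: cfg => _ []. Qed.
Lemma dhx : hx \in darts G. Proof. by case: cfg1. Qed.
Lemma dhq : hq \in darts G. Proof. by case: cfg1. Qed.
Lemma dhp : hp \in darts G. Proof. exact: opp_in dhx. Qed.
Lemma dhy : hy \in darts G. Proof. exact: opp_in dhq. Qed.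
#[local] Hint Resolve dhx dhq dhp dhy : core.
Lemma rot_in2 h : h \in darts G -> rot G (rot G h) \in darts G.
Proof. by move=> hd; do 2 apply: rot_in. Qed.
#[local] Hint Resolve rot_in rot_in2 : core.
Lemma d1hx : rot G hx \in darts G. Proof. exact: rot_in. Qed.
Lemma d2hx : rot G (rot G hx) \in darts G. Proof. exact: rot_in2. Qed.
#[local] Hint Resolve d1hx d2hx : core.
Lemma d1hp : rot G hp \in darts G. Proof. exact: rot_in. Qed.
Lemma d2hp : rot G (rot G hp) \in darts G. Proof. exact: rot_in2. Qed.
#[local] Hint Resolve d1hp d2hp : core.
Lemma d1hq : rot G hq \in darts G. Proof. exact: rot_in. Qed.
Lemma d2hq : rot G (rot G hq) \in darts G. Proof. exact: rot_in2. Qed.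
#[local] Hint Resolve d1hq d2hq : core.
Lemma d1hy : rot G hy \in darts G. Proof. exact: rot_in. Qed.
Lemma d2hy : rot G (rot G hy) \in darts G. Proof. exact: rot_in2. Qed.
#[local] Hint Resolve d1hy d2hy : core.
Lemma neq_of_vtx a b : vtx G a != vtx G b -> (a == b) = false.
Proof. by move=> ne; apply/negbTE; apply: contraNneq ne => ->. Qed.
Lemma vne_hx_hp : (vtx G hx == vtx G hp) = false.
Proof. by move: uq; rewrite /= !inE !negb_or => /and4P[/and3P[? ? ?] /andP[? ?] ? _]; apply/negbTE; rewrite // eq_sym. Qed.
Lemma vne_hx_hq : (vtx G hx == vtx G hq) = false.
Proof. by move: uq; rewrite /= !inE !negb_or => /and4P[/and3P[? ? ?] /andP[? ?] ? _]; apply/negbTE; rewrite // eq_sym. Qed.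
Lemma vne_hx_hy : (vtx G hx == vtx G hy) = false.
Proof. by move: uq; rewrite /= !inE !negb_or => /and4P[/and3P[? ? ?] /andP[? ?] ? _]; apply/negbTE; rewrite // eq_sym. Qed.
Lemma vne_hp_hx : (vtx G hp == vtx G hx) = false.
Proof. by move: uq; rewrite /= !inE !negb_or => /and4P[/and3P[? ? ?] /andP[? ?] ? _]; apply/negbTE; rewrite // eq_sym. Qed.
Lemma vne_hp_hq : (vtx G hp == vtx G hq) = false.
Proof. by move: uq; rewrite /= !inE !negb_or => /and4P[/and3P[? ? ?] /andP[? ?] ? _]; apply/negbTE; rewrite // eq_sym. Qed.
Lemma vne_hp_hy : (vtx G hp == vtx G hy) = false.
Proof. by move: uq; rewrite /= !inE !negb_or => /and4P[/and3P[? ? ?] /andP[? ?] ? _]; apply/negbTE; rewrite // eq_sym. Qed.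
Lemma vne_hq_hx : (vtx G hq == vtx G hx) = false.
Proof. by move: uq; rewrite /= !inE !negb_or => /and4P[/and3P[? ? ?] /andP[? ?] ? _]; apply/negbTE; rewrite // eq_sym. Qed.
Lemma vne_hq_hp : (vtx G hq == vtx G hp) = false.
Proof. by move: uq; rewrite /= !inE !negb_or => /and4P[/and3P[? ? ?] /andP[? ?] ? _]; apply/negbTE; rewrite // eq_sym. Qed.
Lemma vne_hq_hy : (vtx G hq == vtx G hy) = false.
Proof. by move: uq; rewrite /= !inE !negb_or => /and4P[/and3P[? ? ?] /andP[? ?] ? _]; apply/negbTE; rewrite // eq_sym. Qed.
Lemma vne_hy_hx : (vtx G hy == vtx G hx) = false.
Proof. by move: uq; rewrite /= !inE !negb_or => /and4P[/and3P[? ? ?] /andP[? ?] ? _]; apply/negbTE; rewrite // eq_sym. Qed.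
Lemma vne_hy_hp : (vtx G hy == vtx G hp) = false.
Proof. by move: uq; rewrite /= !inE !negb_or => /and4P[/and3P[? ? ?] /andP[? ?] ? _]; apply/negbTE; rewrite // eq_sym. Qed.
Lemma vne_hy_hq : (vtx G hy == vtx G hq) = false.
Proof. by move: uq; rewrite /= !inE !negb_or => /and4P[/and3P[? ? ?] /andP[? ?] ? _]; apply/negbTE; rewrite // eq_sym. Qed.
Definition vneqs := (vne_hx_hp, vne_hx_hq, vne_hx_hy, vne_hp_hx, vne_hp_hq, vne_hp_hy, vne_hq_hx, vne_hq_hp, vne_hq_hy, vne_hy_hx, vne_hy_hp, vne_hy_hq).
Lemma ne_hx0_hx1 : (hx == (rot G hx)) = false.
Proof. by rewrite eq_sym rot_neq. Qed.
Lemma ne_hx0_hx2 : (hx == (rot G (rot G hx))) = false.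
Proof. by rewrite eq_sym rot2_neq. Qed.
Lemma ne_hx0_hp0 : (hx == hp) = false.
Proof. by apply: neq_of_vtx; rewrite ?vtx_rot // ?vtx_rot //; apply/negbT; rewrite vneqs. Qed.
Lemma ne_hx0_hp1 : (hx == (rot G hp)) = false.
Proof. by apply: neq_of_vtx; rewrite ?vtx_rot // ?vtx_rot //; apply/negbT; rewrite vneqs. Qed.
Lemma ne_hx0_hp2 : (hx == (rot G (rot G hp))) = false.
Proof. by apply: neq_of_vtx; rewrite ?vtx_rot // ?vtx_rot //; apply/negbT; rewrite vneqs. Qed.
Lemma ne_hx0_hq0 : (hx == hq) = false.
Proof. by apply: neq_of_vtx; rewrite ?vtx_rot // ?vtx_rot //; apply/negbT; rewrite vneqs. Qed.
Lemma ne_hx0_hq1 : (hx == (rot G hq)) = false.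
Proof. by apply: neq_of_vtx; rewrite ?vtx_rot // ?vtx_rot //; apply/negbT; rewrite vneqs. Qed.
Lemma ne_hx0_hq2 : (hx == (rot G (rot G hq))) = false.
Proof. by apply: neq_of_vtx; rewrite ?vtx_rot // ?vtx_rot //; apply/negbT; rewrite vneqs. Qed.
Lemma ne_hx0_hy0 : (hx == hy) = false.
Proof. by apply: neq_of_vtx; rewrite ?vtx_rot // ?vtx_rot //; apply/negbT; rewrite vneqs. Qed.
Lemma ne_hx0_hy1 : (hx == (rot G hy)) = false.
Proof. by apply: neq_of_vtx; rewrite ?vtx_rot // ?vtx_rot //; apply/negbT; rewrite vneqs. Qed.
Lemma ne_hx0_hy2 : (hx == (rot G (rot G hy))) = false.
Proof. by apply: neq_of_vtx; rewrite ?vtx_rot // ?vtx_rot //; apply/negbT; rewrite vneqs. Qed.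
Lemma ne_hx1_hx0 : ((rot G hx) == hx) = false.
Proof. by rewrite rot_neq. Qed.
Lemma ne_hx1_hx2 : ((rot G hx) == (rot G (rot G hx))) = false.
Proof. by rewrite eq_sym rot21_neq. Qed.
Lemma ne_hx1_hp0 : ((rot G hx) == hp) = false.
Proof. by apply: neq_of_vtx; rewrite ?vtx_rot // ?vtx_rot //; apply/negbT; rewrite vneqs. Qed.
Lemma ne_hx1_hp1 : ((rot G hx) == (rot G hp)) = false.
Proof. by apply: neq_of_vtx; rewrite ?vtx_rot // ?vtx_rot //; apply/negbT; rewrite vneqs. Qed.
Lemma ne_hx1_hp2 : ((rot G hx) == (rot G (rot G hp))) = false.
Proof. by apply: neq_of_vtx; rewrite ?vtx_rot // ?vtx_rot //; apply/negbT; rewrite vneqs. Qed.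
Lemma ne_hx1_hq0 : ((rot G hx) == hq) = false.
Proof. by apply: neq_of_vtx; rewrite ?vtx_rot // ?vtx_rot //; apply/negbT; rewrite vneqs. Qed.
Lemma ne_hx1_hq1 : ((rot G hx) == (rot G hq)) = false.
Proof. by apply: neq_of_vtx; rewrite ?vtx_rot // ?vtx_rot //; apply/negbT; rewrite vneqs. Qed.
Lemma ne_hx1_hq2 : ((rot G hx) == (rot G (rot G hq))) = false.
Proof. by apply: neq_of_vtx; rewrite ?vtx_rot // ?vtx_rot //; apply/negbT; rewrite vneqs. Qed.
Lemma ne_hx1_hy0 : ((rot G hx) == hy) = false.
Proof. by apply: neq_of_vtx; rewrite ?vtx_rot // ?vtx_rot //; apply/negbT; rewrite vneqs. Qed.
Lemma ne_hx1_hy1 : ((rot G hx) == (rot G hy)) = false.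
Proof. by apply: neq_of_vtx; rewrite ?vtx_rot // ?vtx_rot //; apply/negbT; rewrite vneqs. Qed.
Lemma ne_hx1_hy2 : ((rot G hx) == (rot G (rot G hy))) = false.
Proof. by apply: neq_of_vtx; rewrite ?vtx_rot // ?vtx_rot //; apply/negbT; rewrite vneqs. Qed.
Lemma ne_hx2_hx0 : ((rot G (rot G hx)) == hx) = false.
Proof. by rewrite rot2_neq. Qed.
Lemma ne_hx2_hx1 : ((rot G (rot G hx)) == (rot G hx)) = false.
Proof. by rewrite rot21_neq. Qed.
Lemma ne_hx2_hp0 : ((rot G (rot G hx)) == hp) = false.
Proof. by apply: neq_of_vtx; rewrite ?vtx_rot // ?vtx_rot //; apply/negbT; rewrite vneqs. Qed.
Lemma ne_hx2_hp1 : ((rot G (rot G hx)) == (rot G hp)) = false.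
Proof. by apply: neq_of_vtx; rewrite ?vtx_rot // ?vtx_rot //; apply/negbT; rewrite vneqs. Qed.
Lemma ne_hx2_hp2 : ((rot G (rot G hx)) == (rot G (rot G hp))) = false.
Proof. by apply: neq_of_vtx; rewrite ?vtx_rot // ?vtx_rot //; apply/negbT; rewrite vneqs. Qed.
Lemma ne_hx2_hq0 : ((rot G (rot G hx)) == hq) = false.
Proof. by apply: neq_of_vtx; rewrite ?vtx_rot // ?vtx_rot //; apply/negbT; rewrite vneqs. Qed.
Lemma ne_hx2_hq1 : ((rot G (rot G hx)) == (rot G hq)) = false.
Proof. by apply: neq_of_vtx; rewrite ?vtx_rot // ?vtx_rot //; apply/negbT; rewrite vneqs. Qed.
Lemma ne_hx2_hq2 : ((rot G (rot G hx)) == (rot G (rot G hq))) = false.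
Proof. by apply: neq_of_vtx; rewrite ?vtx_rot // ?vtx_rot //; apply/negbT; rewrite vneqs. Qed.
Lemma ne_hx2_hy0 : ((rot G (rot G hx)) == hy) = false.
Proof. by apply: neq_of_vtx; rewrite ?vtx_rot // ?vtx_rot //; apply/negbT; rewrite vneqs. Qed.
Lemma ne_hx2_hy1 : ((rot G (rot G hx)) == (rot G hy)) = false.
Proof. by apply: neq_of_vtx; rewrite ?vtx_rot // ?vtx_rot //; apply/negbT; rewrite vneqs. Qed.
Lemma ne_hx2_hy2 : ((rot G (rot G hx)) == (rot G (rot G hy))) = false.
Proof. by apply: neq_of_vtx; rewrite ?vtx_rot // ?vtx_rot //; apply/negbT; rewrite vneqs. Qed.
Lemma ne_hp0_hx0 : (hp == hx) = false.
Proof. by apply: neq_of_vtx; rewrite ?vtx_rot // ?vtx_rot //; apply/negbT; rewrite vneqs. Qed.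
Lemma ne_hp0_hx1 : (hp == (rot G hx)) = false.
Proof. by apply: neq_of_vtx; rewrite ?vtx_rot // ?vtx_rot //; apply/negbT; rewrite vneqs. Qed.
Lemma ne_hp0_hx2 : (hp == (rot G (rot G hx))) = false.
Proof. by apply: neq_of_vtx; rewrite ?vtx_rot // ?vtx_rot //; apply/negbT; rewrite vneqs. Qed.
Lemma ne_hp0_hp1 : (hp == (rot G hp)) = false.
Proof. by rewrite eq_sym rot_neq. Qed.
Lemma ne_hp0_hp2 : (hp == (rot G (rot G hp))) = false.
Proof. by rewrite eq_sym rot2_neq. Qed.
Lemma ne_hp0_hq0 : (hp == hq) = false.
Proof. by apply: neq_of_vtx; rewrite ?vtx_rot // ?vtx_rot //; apply/negbT; rewrite vneqs. Qed.
Lemma ne_hp0_hq1 : (hp == (rot G hq)) = false.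
Proof. by apply: neq_of_vtx; rewrite ?vtx_rot // ?vtx_rot //; apply/negbT; rewrite vneqs. Qed.
Lemma ne_hp0_hq2 : (hp == (rot G (rot G hq))) = false.
Proof. by apply: neq_of_vtx; rewrite ?vtx_rot // ?vtx_rot //; apply/negbT; rewrite vneqs. Qed.
Lemma ne_hp0_hy0 : (hp == hy) = false.
Proof. by apply: neq_of_vtx; rewrite ?vtx_rot // ?vtx_rot //; apply/negbT; rewrite vneqs. Qed.
Lemma ne_hp0_hy1 : (hp == (rot G hy)) = false.
Proof. by apply: neq_of_vtx; rewrite ?vtx_rot // ?vtx_rot //; apply/negbT; rewrite vneqs. Qed.
Lemma ne_hp0_hy2 : (hp == (rot G (rot G hy))) = false.
Proof. by apply: neq_of_vtx; rewrite ?vtx_rot // ?vtx_rot //; apply/negbT; rewrite vneqs. Qed.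
Lemma ne_hp1_hx0 : ((rot G hp) == hx) = false.
Proof. by apply: neq_of_vtx; rewrite ?vtx_rot // ?vtx_rot //; apply/negbT; rewrite vneqs. Qed.
Lemma ne_hp1_hx1 : ((rot G hp) == (rot G hx)) = false.
Proof. by apply: neq_of_vtx; rewrite ?vtx_rot // ?vtx_rot //; apply/negbT; rewrite vneqs. Qed.
Lemma ne_hp1_hx2 : ((rot G hp) == (rot G (rot G hx))) = false.
Proof. by apply: neq_of_vtx; rewrite ?vtx_rot // ?vtx_rot //; apply/negbT; rewrite vneqs. Qed.
Lemma ne_hp1_hp0 : ((rot G hp) == hp) = false.
Proof. by rewrite rot_neq. Qed.
Lemma ne_hp1_hp2 : ((rot G hp) == (rot G (rot G hp))) = false.
Proof. by rewrite eq_sym rot21_neq. Qed.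
Lemma ne_hp1_hq0 : ((rot G hp) == hq) = false.
Proof. by apply: neq_of_vtx; rewrite ?vtx_rot // ?vtx_rot //; apply/negbT; rewrite vneqs. Qed.
Lemma ne_hp1_hq1 : ((rot G hp) == (rot G hq)) = false.
Proof. by apply: neq_of_vtx; rewrite ?vtx_rot // ?vtx_rot //; apply/negbT; rewrite vneqs. Qed.
Lemma ne_hp1_hq2 : ((rot G hp) == (rot G (rot G hq))) = false.
Proof. by apply: neq_of_vtx; rewrite ?vtx_rot // ?vtx_rot //; apply/negbT; rewrite vneqs. Qed.
Lemma ne_hp1_hy0 : ((rot G hp) == hy) = false.
Proof. by apply: neq_of_vtx; rewrite ?vtx_rot // ?vtx_rot //; apply/negbT; rewrite vneqs. Qed.
Lemma ne_hp1_hy1 : ((rot G hp) == (rot G hy)) = false.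
Proof. by apply: neq_of_vtx; rewrite ?vtx_rot // ?vtx_rot //; apply/negbT; rewrite vneqs. Qed.
Lemma ne_hp1_hy2 : ((rot G hp) == (rot G (rot G hy))) = false.
Proof. by apply: neq_of_vtx; rewrite ?vtx_rot // ?vtx_rot //; apply/negbT; rewrite vneqs. Qed.
Lemma ne_hp2_hx0 : ((rot G (rot G hp)) == hx) = false.
Proof. by apply: neq_of_vtx; rewrite ?vtx_rot // ?vtx_rot //; apply/negbT; rewrite vneqs. Qed.
Lemma ne_hp2_hx1 : ((rot G (rot G hp)) == (rot G hx)) = false.
Proof. by apply: neq_of_vtx; rewrite ?vtx_rot // ?vtx_rot //; apply/negbT; rewrite vneqs. Qed.
Lemma ne_hp2_hx2 : ((rot G (rot G hp)) == (rot G (rot G hx))) = false.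
Proof. by apply: neq_of_vtx; rewrite ?vtx_rot // ?vtx_rot //; apply/negbT; rewrite vneqs. Qed.
Lemma ne_hp2_hp0 : ((rot G (rot G hp)) == hp) = false.
Proof. by rewrite rot2_neq. Qed.
Lemma ne_hp2_hp1 : ((rot G (rot G hp)) == (rot G hp)) = false.
Proof. by rewrite rot21_neq. Qed.
Lemma ne_hp2_hq0 : ((rot G (rot G hp)) == hq) = false.
Proof. by apply: neq_of_vtx; rewrite ?vtx_rot // ?vtx_rot //; apply/negbT; rewrite vneqs. Qed.
Lemma ne_hp2_hq1 : ((rot G (rot G hp)) == (rot G hq)) = false.
Proof. by apply: neq_of_vtx; rewrite ?vtx_rot // ?vtx_rot //; apply/negbT; rewrite vneqs. Qed.
Lemma ne_hp2_hq2 : ((rot G (rot G hp)) == (rot G (rot G hq))) = false.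
Proof. by apply: neq_of_vtx; rewrite ?vtx_rot // ?vtx_rot //; apply/negbT; rewrite vneqs. Qed.
Lemma ne_hp2_hy0 : ((rot G (rot G hp)) == hy) = false.
Proof. by apply: neq_of_vtx; rewrite ?vtx_rot // ?vtx_rot //; apply/negbT; rewrite vneqs. Qed.
Lemma ne_hp2_hy1 : ((rot G (rot G hp)) == (rot G hy)) = false.
Proof. by apply: neq_of_vtx; rewrite ?vtx_rot // ?vtx_rot //; apply/negbT; rewrite vneqs. Qed.
Lemma ne_hp2_hy2 : ((rot G (rot G hp)) == (rot G (rot G hy))) = false.
Proof. by apply: neq_of_vtx; rewrite ?vtx_rot // ?vtx_rot //; apply/negbT; rewrite vneqs. Qed.
Lemma ne_hq0_hx0 : (hq == hx) = false.
Proof. by apply: neq_of_vtx; rewrite ?vtx_rot // ?vtx_rot //; apply/negbT; rewrite vneqs. Qed.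
Lemma ne_hq0_hx1 : (hq == (rot G hx)) = false.
Proof. by apply: neq_of_vtx; rewrite ?vtx_rot // ?vtx_rot //; apply/negbT; rewrite vneqs. Qed.
Lemma ne_hq0_hx2 : (hq == (rot G (rot G hx))) = false.
Proof. by apply: neq_of_vtx; rewrite ?vtx_rot // ?vtx_rot //; apply/negbT; rewrite vneqs. Qed.
Lemma ne_hq0_hp0 : (hq == hp) = false.
Proof. by apply: neq_of_vtx; rewrite ?vtx_rot // ?vtx_rot //; apply/negbT; rewrite vneqs. Qed.
Lemma ne_hq0_hp1 : (hq == (rot G hp)) = false.
Proof. by apply: neq_of_vtx; rewrite ?vtx_rot // ?vtx_rot //; apply/negbT; rewrite vneqs. Qed.
Lemma ne_hq0_hp2 : (hq == (rot G (rot G hp))) = false.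
Proof. by apply: neq_of_vtx; rewrite ?vtx_rot // ?vtx_rot //; apply/negbT; rewrite vneqs. Qed.
Lemma ne_hq0_hq1 : (hq == (rot G hq)) = false.
Proof. by rewrite eq_sym rot_neq. Qed.
Lemma ne_hq0_hq2 : (hq == (rot G (rot G hq))) = false.
Proof. by rewrite eq_sym rot2_neq. Qed.
Lemma ne_hq0_hy0 : (hq == hy) = false.
Proof. by apply: neq_of_vtx; rewrite ?vtx_rot // ?vtx_rot //; apply/negbT; rewrite vneqs. Qed.
Lemma ne_hq0_hy1 : (hq == (rot G hy)) = false.
Proof. by apply: neq_of_vtx; rewrite ?vtx_rot // ?vtx_rot //; apply/negbT; rewrite vneqs. Qed.
Lemma ne_hq0_hy2 : (hq == (rot G (rot G hy))) = false.
Proof. by apply: neq_of_vtx; rewrite ?vtx_rot // ?vtx_rot //; apply/negbT; rewrite vneqs. Qed.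
Lemma ne_hq1_hx0 : ((rot G hq) == hx) = false.
Proof. by apply: neq_of_vtx; rewrite ?vtx_rot // ?vtx_rot //; apply/negbT; rewrite vneqs. Qed.
Lemma ne_hq1_hx1 : ((rot G hq) == (rot G hx)) = false.
Proof. by apply: neq_of_vtx; rewrite ?vtx_rot // ?vtx_rot //; apply/negbT; rewrite vneqs. Qed.
Lemma ne_hq1_hx2 : ((rot G hq) == (rot G (rot G hx))) = false.
Proof. by apply: neq_of_vtx; rewrite ?vtx_rot // ?vtx_rot //; apply/negbT; rewrite vneqs. Qed.
Lemma ne_hq1_hp0 : ((rot G hq) == hp) = false.
Proof. by apply: neq_of_vtx; rewrite ?vtx_rot // ?vtx_rot //; apply/negbT; rewrite vneqs. Qed.
Lemma ne_hq1_hp1 : ((rot G hq) == (rot G hp)) = false.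
Proof. by apply: neq_of_vtx; rewrite ?vtx_rot // ?vtx_rot //; apply/negbT; rewrite vneqs. Qed.
Lemma ne_hq1_hp2 : ((rot G hq) == (rot G (rot G hp))) = false.
Proof. by apply: neq_of_vtx; rewrite ?vtx_rot // ?vtx_rot //; apply/negbT; rewrite vneqs. Qed.
Lemma ne_hq1_hq0 : ((rot G hq) == hq) = false.
Proof. by rewrite rot_neq. Qed.
Lemma ne_hq1_hq2 : ((rot G hq) == (rot G (rot G hq))) = false.
Proof. by rewrite eq_sym rot21_neq. Qed.
Lemma ne_hq1_hy0 : ((rot G hq) == hy) = false.
Proof. by apply: neq_of_vtx; rewrite ?vtx_rot // ?vtx_rot //; apply/negbT; rewrite vneqs. Qed.
Lemma ne_hq1_hy1 : ((rot G hq) == (rot G hy)) = false.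
Proof. by apply: neq_of_vtx; rewrite ?vtx_rot // ?vtx_rot //; apply/negbT; rewrite vneqs. Qed.
Lemma ne_hq1_hy2 : ((rot G hq) == (rot G (rot G hy))) = false.
Proof. by apply: neq_of_vtx; rewrite ?vtx_rot // ?vtx_rot //; apply/negbT; rewrite vneqs. Qed.
Lemma ne_hq2_hx0 : ((rot G (rot G hq)) == hx) = false.
Proof. by apply: neq_of_vtx; rewrite ?vtx_rot // ?vtx_rot //; apply/negbT; rewrite vneqs. Qed.
Lemma ne_hq2_hx1 : ((rot G (rot G hq)) == (rot G hx)) = false.
Proof. by apply: neq_of_vtx; rewrite ?vtx_rot // ?vtx_rot //; apply/negbT; rewrite vneqs. Qed.
Lemma ne_hq2_hx2 : ((rot G (rot G hq)) == (rot G (rot G hx))) = false.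
Proof. by apply: neq_of_vtx; rewrite ?vtx_rot // ?vtx_rot //; apply/negbT; rewrite vneqs. Qed.
Lemma ne_hq2_hp0 : ((rot G (rot G hq)) == hp) = false.
Proof. by apply: neq_of_vtx; rewrite ?vtx_rot // ?vtx_rot //; apply/negbT; rewrite vneqs. Qed.
Lemma ne_hq2_hp1 : ((rot G (rot G hq)) == (rot G hp)) = false.
Proof. by apply: neq_of_vtx; rewrite ?vtx_rot // ?vtx_rot //; apply/negbT; rewrite vneqs. Qed.
Lemma ne_hq2_hp2 : ((rot G (rot G hq)) == (rot G (rot G hp))) = false.
Proof. by apply: neq_of_vtx; rewrite ?vtx_rot // ?vtx_rot //; apply/negbT; rewrite vneqs. Qed.
Lemma ne_hq2_hq0 : ((rot G (rot G hq)) == hq) = false.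
Proof. by rewrite rot2_neq. Qed.
Lemma ne_hq2_hq1 : ((rot G (rot G hq)) == (rot G hq)) = false.
Proof. by rewrite rot21_neq. Qed.
Lemma ne_hq2_hy0 : ((rot G (rot G hq)) == hy) = false.
Proof. by apply: neq_of_vtx; rewrite ?vtx_rot // ?vtx_rot //; apply/negbT; rewrite vneqs. Qed.
Lemma ne_hq2_hy1 : ((rot G (rot G hq)) == (rot G hy)) = false.
Proof. by apply: neq_of_vtx; rewrite ?vtx_rot // ?vtx_rot //; apply/negbT; rewrite vneqs. Qed.
Lemma ne_hq2_hy2 : ((rot G (rot G hq)) == (rot G (rot G hy))) = false.
Proof. by apply: neq_of_vtx; rewrite ?vtx_rot // ?vtx_rot //; apply/negbT; rewrite vneqs. Qed.
Lemma ne_hy0_hx0 : (hy == hx) = false.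
Proof. by apply: neq_of_vtx; rewrite ?vtx_rot // ?vtx_rot //; apply/negbT; rewrite vneqs. Qed.
Lemma ne_hy0_hx1 : (hy == (rot G hx)) = false.
Proof. by apply: neq_of_vtx; rewrite ?vtx_rot // ?vtx_rot //; apply/negbT; rewrite vneqs. Qed.
Lemma ne_hy0_hx2 : (hy == (rot G (rot G hx))) = false.
Proof. by apply: neq_of_vtx; rewrite ?vtx_rot // ?vtx_rot //; apply/negbT; rewrite vneqs. Qed.
Lemma ne_hy0_hp0 : (hy == hp) = false.
Proof. by apply: neq_of_vtx; rewrite ?vtx_rot // ?vtx_rot //; apply/negbT; rewrite vneqs. Qed.
Lemma ne_hy0_hp1 : (hy == (rot G hp)) = false.
Proof. by apply: neq_of_vtx; rewrite ?vtx_rot // ?vtx_rot //; apply/negbT; rewrite vneqs. Qed.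
Lemma ne_hy0_hp2 : (hy == (rot G (rot G hp))) = false.
Proof. by apply: neq_of_vtx; rewrite ?vtx_rot // ?vtx_rot //; apply/negbT; rewrite vneqs. Qed.
Lemma ne_hy0_hq0 : (hy == hq) = false.
Proof. by apply: neq_of_vtx; rewrite ?vtx_rot // ?vtx_rot //; apply/negbT; rewrite vneqs. Qed.
Lemma ne_hy0_hq1 : (hy == (rot G hq)) = false.
Proof. by apply: neq_of_vtx; rewrite ?vtx_rot // ?vtx_rot //; apply/negbT; rewrite vneqs. Qed.
Lemma ne_hy0_hq2 : (hy == (rot G (rot G hq))) = false.
Proof. by apply: neq_of_vtx; rewrite ?vtx_rot // ?vtx_rot //; apply/negbT; rewrite vneqs. Qed.
Lemma ne_hy0_hy1 : (hy == (rot G hy)) = false.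
Proof. by rewrite eq_sym rot_neq. Qed.
Lemma ne_hy0_hy2 : (hy == (rot G (rot G hy))) = false.
Proof. by rewrite eq_sym rot2_neq. Qed.
Lemma ne_hy1_hx0 : ((rot G hy) == hx) = false.
Proof. by apply: neq_of_vtx; rewrite ?vtx_rot // ?vtx_rot //; apply/negbT; rewrite vneqs. Qed.
Lemma ne_hy1_hx1 : ((rot G hy) == (rot G hx)) = false.
Proof. by apply: neq_of_vtx; rewrite ?vtx_rot // ?vtx_rot //; apply/negbT; rewrite vneqs. Qed.
Lemma ne_hy1_hx2 : ((rot G hy) == (rot G (rot G hx))) = false.
Proof. by apply: neq_of_vtx; rewrite ?vtx_rot // ?vtx_rot //; apply/negbT; rewrite vneqs. Qed.
Lemma ne_hy1_hp0 : ((rot G hy) == hp) = false.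
Proof. by apply: neq_of_vtx; rewrite ?vtx_rot // ?vtx_rot //; apply/negbT; rewrite vneqs. Qed.
Lemma ne_hy1_hp1 : ((rot G hy) == (rot G hp)) = false.
Proof. by apply: neq_of_vtx; rewrite ?vtx_rot // ?vtx_rot //; apply/negbT; rewrite vneqs. Qed.
Lemma ne_hy1_hp2 : ((rot G hy) == (rot G (rot G hp))) = false.
Proof. by apply: neq_of_vtx; rewrite ?vtx_rot // ?vtx_rot //; apply/negbT; rewrite vneqs. Qed.
Lemma ne_hy1_hq0 : ((rot G hy) == hq) = false.
Proof. by apply: neq_of_vtx; rewrite ?vtx_rot // ?vtx_rot //; apply/negbT; rewrite vneqs. Qed.
Lemma ne_hy1_hq1 : ((rot G hy) == (rot G hq)) = false.
Proof. by apply: neq_of_vtx; rewrite ?vtx_rot // ?vtx_rot //; apply/negbT; rewrite vneqs. Qed.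
Lemma ne_hy1_hq2 : ((rot G hy) == (rot G (rot G hq))) = false.
Proof. by apply: neq_of_vtx; rewrite ?vtx_rot // ?vtx_rot //; apply/negbT; rewrite vneqs. Qed.
Lemma ne_hy1_hy0 : ((rot G hy) == hy) = false.
Proof. by rewrite rot_neq. Qed.
Lemma ne_hy1_hy2 : ((rot G hy) == (rot G (rot G hy))) = false.
Proof. by rewrite eq_sym rot21_neq. Qed.
Lemma ne_hy2_hx0 : ((rot G (rot G hy)) == hx) = false.
Proof. by apply: neq_of_vtx; rewrite ?vtx_rot // ?vtx_rot //; apply/negbT; rewrite vneqs. Qed.
Lemma ne_hy2_hx1 : ((rot G (rot G hy)) == (rot G hx)) = false.
Proof. by apply: neq_of_vtx; rewrite ?vtx_rot // ?vtx_rot //; apply/negbT; rewrite vneqs. Qed.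
Lemma ne_hy2_hx2 : ((rot G (rot G hy)) == (rot G (rot G hx))) = false.
Proof. by apply: neq_of_vtx; rewrite ?vtx_rot // ?vtx_rot //; apply/negbT; rewrite vneqs. Qed.
Lemma ne_hy2_hp0 : ((rot G (rot G hy)) == hp) = false.
Proof. by apply: neq_of_vtx; rewrite ?vtx_rot // ?vtx_rot //; apply/negbT; rewrite vneqs. Qed.
Lemma ne_hy2_hp1 : ((rot G (rot G hy)) == (rot G hp)) = false.
Proof. by apply: neq_of_vtx; rewrite ?vtx_rot // ?vtx_rot //; apply/negbT; rewrite vneqs. Qed.
Lemma ne_hy2_hp2 : ((rot G (rot G hy)) == (rot G (rot G hp))) = false.
Proof. by apply: neq_of_vtx; rewrite ?vtx_rot // ?vtx_rot //; apply/negbT; rewrite vneqs. Qed.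
Lemma ne_hy2_hq0 : ((rot G (rot G hy)) == hq) = false.
Proof. by apply: neq_of_vtx; rewrite ?vtx_rot // ?vtx_rot //; apply/negbT; rewrite vneqs. Qed.
Lemma ne_hy2_hq1 : ((rot G (rot G hy)) == (rot G hq)) = false.
Proof. by apply: neq_of_vtx; rewrite ?vtx_rot // ?vtx_rot //; apply/negbT; rewrite vneqs. Qed.
Lemma ne_hy2_hq2 : ((rot G (rot G hy)) == (rot G (rot G hq))) = false.
Proof. by apply: neq_of_vtx; rewrite ?vtx_rot // ?vtx_rot //; apply/negbT; rewrite vneqs. Qed.
Lemma ne_hy2_hy0 : ((rot G (rot G hy)) == hy) = false.
Proof. by rewrite rot2_neq. Qed.
Lemma ne_hy2_hy1 : ((rot G (rot G hy)) == (rot G hy)) = false.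
Proof. by rewrite rot21_neq. Qed.
Definition neqs := (ne_hx0_hx1, ne_hx0_hx2, ne_hx0_hp0, ne_hx0_hp1, ne_hx0_hp2, ne_hx0_hq0, ne_hx0_hq1, ne_hx0_hq2, ne_hx0_hy0, ne_hx0_hy1, ne_hx0_hy2, ne_hx1_hx0, ne_hx1_hx2, ne_hx1_hp0, ne_hx1_hp1, ne_hx1_hp2, ne_hx1_hq0, ne_hx1_hq1, ne_hx1_hq2, ne_hx1_hy0, ne_hx1_hy1, ne_hx1_hy2, ne_hx2_hx0, ne_hx2_hx1, ne_hx2_hp0, ne_hx2_hp1, ne_hx2_hp2, ne_hx2_hq0, ne_hx2_hq1, ne_hx2_hq2, ne_hx2_hy0, ne_hx2_hy1, ne_hx2_hy2, ne_hp0_hx0, ne_hp0_hx1, ne_hp0_hx2, ne_hp0_hp1, ne_hp0_hp2, ne_hp0_hq0, ne_hp0_hq1, ne_hp0_hq2, ne_hp0_hy0, ne_hp0_hy1, ne_hp0_hy2, ne_hp1_hx0, ne_hp1_hx1, ne_hp1_hx2, ne_hp1_hp0, ne_hp1_hp2, ne_hp1_hq0, ne_hp1_hq1, ne_hp1_hq2, ne_hp1_hy0, ne_hp1_hy1, ne_hp1_hy2, ne_hp2_hx0, ne_hp2_hx1, ne_hp2_hx2, ne_hp2_hp0, ne_hp2_hp1, ne_hp2_hq0, ne_hp2_hq1, ne_hp2_hq2, ne_hp2_hy0, ne_hp2_hy1, ne_hp2_hy2, ne_hq0_hx0, ne_hq0_hx1, ne_hq0_hx2, ne_hq0_hp0,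 ne_hq0_hp1, ne_hq0_hp2, ne_hq0_hq1, ne_hq0_hq2, ne_hq0_hy0, ne_hq0_hy1, ne_hq0_hy2, ne_hq1_hx0, ne_hq1_hx1, ne_hq1_hx2, ne_hq1_hp0, ne_hq1_hp1, ne_hq1_hp2, ne_hq1_hq0, ne_hq1_hq2, ne_hq1_hy0, ne_hq1_hy1, ne_hq1_hy2, ne_hq2_hx0, ne_hq2_hx1, ne_hq2_hx2, ne_hq2_hp0, ne_hq2_hp1, ne_hq2_hp2, ne_hq2_hq0, ne_hq2_hq1, ne_hq2_hy0, ne_hq2_hy1, ne_hq2_hy2, ne_hy0_hx0, ne_hy0_hx1, ne_hy0_hx2, ne_hy0_hp0, ne_hy0_hp1, ne_hy0_hp2, ne_hy0_hq0, ne_hy0_hq1, ne_hy0_hq2, ne_hy0_hy1, ne_hy0_hy2, ne_hy1_hx0, ne_hy1_hx1, ne_hy1_hx2, ne_hy1_hp0, ne_hy1_hp1, ne_hy1_hp2, ne_hy1_hq0, ne_hy1_hq1, ne_hy1_hq2, ne_hy1_hy0, ne_hy1_hy2, ne_hy2_hx0, ne_hy2_hx1, ne_hy2_hx2, ne_hy2_hp0, ne_hy2_hp1, ne_hy2_hp2, ne_hy2_hq0, ne_hy2_hq1, ne_hy2_hq2, ne_hy2_hy0, ne_hy2_hy1).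

Lemma mhx : matched G hx. Proof. by case: cfg1. Qed.
Lemma mhq : matched G hq. Proof. by case: cfg1. Qed.
Lemma mhp : matched G hp. Proof. by rewrite matched_opp // mhx. Qed.
Lemma mhy : matched G hy. Proof. by rewrite matched_opp // mhq. Qed.
Lemma mxa : matched G (rot G hx) = false. Proof. by case: (matched_rot dhx mhx). Qed.
Lemma mxb : matched G (rot G (rot G hx)) = false. Proof. by case: (matched_rot dhx mhx). Qed.
Lemma mpa : matched G (rot G hp) = false. Proof. by case: (matched_rot dhp mhp). Qed.
Lemma mpb : matched G (rot G (rot G hp)) = false. Proof. by case: (matched_rot dhp mhp). Qed.
Lemma mqa : matched G (rot G hq) = false. Proof. by case: (matched_rot dhq mhq). Qed.
Lemma mqb : matched G (rot G (rot G hq)) = false. Proof. by case: (matched_rot dhq mhq). Qed.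
Lemma mya : matched G (rot G hy) = false. Proof. by case: (matched_rot dhy mhy). Qed.
Lemma myb : matched G (rot G (rot G hy)) = false. Proof. by case: (matched_rot dhy mhy). Qed.
Definition mats := (mhx, mhq, mhp, mhy, mxa, mxb, mpa, mpb, mqa, mqb, mya, myb).
Lemma opp_hp : opp G hp = hx. Proof. exact: oppK. Qed.
Lemma opp_hy : opp G hy = hq. Proof. exact: oppK. Qed.
Lemma bg3 : opp G (rot G hq) = rot G (rot G hp).
Proof. by rewrite -bg1 oppK. Qed.
Lemma bg4 : opp G (rot G (rot G hq)) = rot G hp.
Proof. by rewrite -bg2 oppK. Qed.
Lemma r3x : rot G (rot G (rot G hx)) = hx. Proof. exact: rot3. Qed.
Lemma r3p : rot G (rot G (rot G hp)) = hp. Proof. exact: rot3. Qed.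
Lemma r3q : rot G (rot G (rot G hq)) = hq. Proof. exact: rot3. Qed.
Lemma r3y : rot G (rot G (rot G hy)) = hy. Proof. exact: rot3. Qed.
Definition opps := (opp_hp, opp_hy, bg1, bg2, bg3, bg4, r3x, r3p, r3q, r3y).

Local Notation G' := (replace_bigon G hx hq).
Definition four := [set hx; hp; hq; hy].
Definition fS (S : {set H}) := [set h |
  (~~ [|| h == hx, h == hp, h == hq | h == hy] && (h \in S)) ||
  (((hx \in S) != (hq \in S)) && ((h == hx) || (h == hy)))].
Definition gS (b : bool) (S : {set H}) := [set h |
  [|| ~~ ((h == hx) || (h == hy)) && (h \in S), b && ((h == hx) || (h == hp))
    | (b != (hx \in S)) && ((h == hq) || (h == hy))]].

Lemma opp_eq h d : h \in darts G -> d \in darts G -> (opp G h == d) = (h == opp G d).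
Proof. by move=> hd dd; apply/eqP/eqP => [<-|->]; rewrite oppK. Qed.

Lemma statesF S : S \in states G ->
  (hp \in S) = (hx \in S) /\ (hy \in S) = (hq \in S).
Proof.
case/statesP => sm so; split.
- by apply/idP/idP => /so; rewrite ?opp_hp.
- by apply/idP/idP => /so; rewrite ?opp_hy.
Qed.
Lemma statesN S d : S \in states G -> matched G d = false -> (d \in S) = false.
Proof. by case/statesP => sm _ md; apply/negP => /sm; rewrite md andbF. Qed.

Ltac casesh h :=
  have [->|/negbTE e1] := eqVneq h hx; last
  have [->|/negbTE e2] := eqVneq h (opp G hx); last
  have [->|/negbTE e3] := eqVneq h hq; last
  have [->|/negbTE e4] := eqVneq h (opp G hq); last
  have [->|/negbTE e5] := eqVneq h (rot G hx); last
  have [->|/negbTE e6] := eqVneq h (rot G (rot G hx)); last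
  have [->|/negbTE e7] := eqVneq h (rot G (opp G hx)); last
  have [->|/negbTE e8] := eqVneq h (rot G (rot G (opp G hx))); last
  have [->|/negbTE e9] := eqVneq h (rot G hq); last
  have [->|/negbTE e10] := eqVneq h (rot G (rot G hq)); last
  have [->|/negbTE e11] := eqVneq h (rot G (opp G hq)); last
  have [->|/negbTE e12] := eqVneq h (rot G (rot G (opp G hq))).
Ltac rwe := repeat (match goal with E : (_ == _) = false |- _ => progress rewrite E end).

Lemma oppS S d : S \in states G -> d \in darts G -> (opp G d \in S) = (d \in S).
Proof. by case/statesP => _ so dd; apply/idP/idP => /so //; rewrite oppK. Qed.

Definition dall := (dhx, dhp, dhq, dhy, d1hx, d2hx, d1hp, d2hp, d1hq, d2hq, d1hy, d2hy).

Lemma L1 S : S \in states G -> fS S \in states G'.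
Proof.
move=> St; have [hpS hyS] := statesF St.
have nS := (@statesN _ _ St mxa, @statesN _ _ St mxb, @statesN _ _ St mpa, @statesN _ _ St mpb, @statesN _ _ St mqa, @statesN _ _ St mqb, @statesN _ _ St mya, @statesN _ _ St myb).
have oS d := @oppS S d St.
case/statesP: (St) => sm so; apply/statesP; split => h; rewrite !inE /=.
  casesh h; rwe; rewrite /= ?neqs ?eqxx ?mats ?hpS ?hyS ?nS ?dall /= ?andbF ?andbT ?orbF //.
  by move/sm.
casesh h; last first.
  rwe; rewrite /= ?andbF ?orbF => hS; have /andP[hd _] := sm _ hS.
  by rewrite oS // !opp_eq // ?opps; rwe; rewrite hS.
all: rewrite /= ?neqs ?eqxx ?opps ?oS ?dall ?opp_eq ?dall ?opps ?neqs ?eqxx ?mats ?hpS ?hyS ?nS /= ?andbF ?andbT ?orbF //.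
all: try (case: (hx \in S); case: (hq \in S); by []).
Qed.

Lemma statesF' S : S \in states G' ->
  [/\ (hp \in S) = false, (hq \in S) = false & (hy \in S) = (hx \in S)].
Proof.
case/statesP => sm so; split.
- by apply/negP => /sm; rewrite /= !inE eqxx.
- by apply/negP => /sm; rewrite /= !inE eqxx !orbT.
- by apply/idP/idP => /so /=; rewrite ?neqs ?eqxx.
Qed.

Lemma L2 b S : S \in states G' -> gS b S \in states G.
Proof.
move=> St; have [hpS hqS hyS] := statesF' St.
have nS := (@statesN0 _ _ G' _ _ St mxa, @statesN0 _ _ G' _ _ St mxb, @statesN0 _ _ G' _ _ St mpa, @statesN0 _ _ G' _ _ St mpb, @statesN0 _ _ G' _ _ St mqa, @statesN0 _ _ G' _ _ St mqb, @statesN0 _ _ G' _ _ St mya, @statesN0 _ _ G' _ _ St myb).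
case/statesP: (St) => sm so; apply/statesP; split => h; rewrite !inE /=.
  casesh h; last first.
    rwe; rewrite /= ?andbF ?orbF => hS; have /andP[hd hm] := sm _ hS.
    by move: hd; rewrite /= inE => /andP[_ ->].
  all: rewrite /= ?neqs ?eqxx ?mats ?hpS ?hyS ?hqS ?nS ?dall /= ?andbF ?andbT ?orbF //.
  all: try (case: b; case: (hx \in S); by []).
casesh h; last first.
  rwe; rewrite /= ?andbF ?orbF => hS; have /andP[hd _] := sm _ hS.
  have hd' : h \in darts G by move: hd; rewrite /= inE => /andP[].
  rewrite !opp_eq // ?opps; rwe; rewrite /=.
  by have := so _ hS; rewrite /=; rwe => ->.
all: rewrite /= ?neqs ?eqxx ?opps ?dall ?opp_eq ?dall ?opps ?neqs ?eqxx ?mats ?hpS ?hyS ?hqS ?nS /= ?andbF ?andbT ?orbF //.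
all: try (case: b; case: (hx \in S); by []).
Qed.

Lemma L3 S : S \in states G -> gS (hx \in S) (fS S) = S.
Proof.
move=> St; have [hpS hyS] := statesF St.
have nS := (@statesN _ _ St mxa, @statesN _ _ St mxb, @statesN _ _ St mpa, @statesN _ _ St mpb, @statesN _ _ St mqa, @statesN _ _ St mqb, @statesN _ _ St mya, @statesN _ _ St myb).
apply/setP => h; rewrite !inE /=.
casesh h; last by rwe; rewrite /= ?andbF ?orbF.
all: rewrite /= ?neqs ?eqxx ?mats ?hpS ?hyS ?nS /= ?andbF ?andbT ?orbF //.
all: try (case: (hx \in S); case: (hq \in S); by []).
Qed.

Lemma L4 b S : S \in states G' -> fS (gS b S) = S /\ (hx \in gS b S) = b.
Proof.
move=> St; have [hpS hqS hyS] := statesF' St.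
have nS := (@statesN0 _ _ G' _ _ St mxa, @statesN0 _ _ G' _ _ St mxb, @statesN0 _ _ G' _ _ St mpa, @statesN0 _ _ G' _ _ St mpb, @statesN0 _ _ G' _ _ St mqa, @statesN0 _ _ G' _ _ St mqb, @statesN0 _ _ G' _ _ St mya, @statesN0 _ _ G' _ _ St myb).
split; last by rewrite !inE eqxx /= ?neqs /= ?andbF ?orbF ?andbT; case: b.
apply/setP => h; rewrite !inE /=.
casesh h; last by rwe; rewrite /= ?andbF ?orbF.
all: rewrite /= ?neqs ?eqxx ?mats ?hpS ?hyS ?hqS ?nS /= ?andbF ?andbT ?orbF //.
all: try (case: b; case: (hx \in S); by []).
Qed.

Lemma oppSg (S : {set H}) d : S \in states G -> d \in darts G -> (opp G d \in S) = (d \in S).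
Proof. by case/statesP => _ so dd; apply/idP/idP => /so //; rewrite oppK. Qed.

Lemma link_facts (S : {set H}) u : S \in states G -> u \in darts G -> ~~ matched G u ->
  [/\ link G S u \in darts G, ~~ matched G (link G S u) & link G S (link G S u) = u].
Proof.
move=> St ud um; have c := count1 ud; rewrite (negbTE um) /= in c.
have r1 := rot_in ud; have r2 := rot_in r1.
case mr: (matched G (rot G u)) c => /= c.
{ have mr2 : matched G (rot G (rot G u)) = false by case: (matched G (rot G (rot G u))) c.
  have m'd := opp_in r1; have mm' : matched G (opp G (rot G u)) by rewrite matched_opp.
  have [n1 n2] := matched_rot m'd mm'.
  rewrite /link mr; case: ifP => mS.
  all: rewrite ?rot3 // ?mm' ?n1 ?n2 /= ?rot3 // ?oppSg // ?mS ?oppK // ?rot3 //.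
  all: split => //; repeat (apply: rot_in || apply: opp_in) => //.
}
have mr2 : matched G (rot G (rot G u)) by case: (matched G (rot G (rot G u))) c.
have m'd := opp_in r2; have mm' : matched G (opp G (rot G (rot G u))) by rewrite matched_opp.
have [n1 n2] := matched_rot m'd mm'.
  rewrite /link mr; case: ifP => mS.
  all: rewrite ?rot3 // ?mm' ?n1 ?n2 /= ?rot3 // ?oppSg // ?mS ?oppK // ?rot3 //.
  all: split => //; repeat (apply: rot_in || apply: opp_in) => //.
Qed.



Local Notation xa := (rot G hx).
Local Notation xb := (rot G (rot G hx)).
Local Notation pa := (rot G hp).
Local Notation pb := (rot G (rot G hp)).
Local Notation qa := (rot G hq).
Local Notation qb := (rot G (rot G hq)).
Local Notation ya := (rot G hy).
Local Notation yb := (rot G (rot G hy)).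

Lemma linkT S : S \in states G -> let s1 := hx \in S in let s2 := hq \in S in
  [/\ link G S xa = (if s1 then pa else pb), link G S xb = (if s1 then pb else pa),
      link G S pa = (if s1 then xa else xb) & link G S pb = (if s1 then xb else xa)] /\
  [/\ link G S qa = (if s2 then ya else yb), link G S qb = (if s2 then yb else ya),
      link G S ya = (if s2 then qa else qb) & link G S yb = (if s2 then qb else qa)].
Proof.
move=> St; have [hpS hyS] := statesF St.
by split; split; rewrite /link ?mats ?opps ?mats ?opps ?hpS ?hyS.
Qed.

Lemma linkT' S : S \in states G -> let t := (hx \in S) != (hq \in S) in
  [/\ link G' (fS S) xa = (if t then ya else yb), link G' (fS S) xb = (if t then yb else ya),
      link G' (fS S) ya = (if t then xa else xb) & link G' (fS S) yb = (if t then xb else xa)].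
Proof.
move=> St; have [hpS hyS] := statesF St.
split; rewrite /link /= ?mats ?opps ?mats ?opps ?eqxx ?neqs ?opps !inE ?eqxx ?neqs /= ?orbT ?andbT ?orbF ?andbF //.
all: by case: (hx \in S); case: (hq \in S).
Qed.

Definition Rset := [set pa; pb; qa; qb].
Definition Xset := [set xa; xb; ya; yb].

Lemma KEY S w : S \in states G -> w \in Xset ->
  link G' (fS S) w = link G S (opp G (link G S w)).
Proof.
move=> St; have [[l1 l2 l3 l4] [l5 l6 l7 l8]] := linkT St.
have [k1 k2 k3 k4] := linkT' St.
rewrite !inE -!orbA => /or4P[]/eqP->; rewrite ?k1 ?k2 ?k3 ?k4 ?l1 ?l2 ?l3 ?l4 ?l5 ?l6 ?l7 ?l8;
  case s1: (hx \in S); case s2: (hq \in S); rewrite /= ?opps ?l1 ?l2 ?l3 ?l4 ?l5 ?l6 ?l7 ?l8 ?s1 ?s2 //.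
Qed.

Lemma link_RX S u : S \in states G -> u \in Rset -> link G S u \in Xset.
Proof.
move=> St; have [[l1 l2 l3 l4] [l5 l6 l7 l8]] := linkT St.
rewrite !inE -!orbA => /or4P[]/eqP->; rewrite ?l1 ?l2 ?l3 ?l4 ?l5 ?l6 ?l7 ?l8;
  case: (hx \in S); case: (hq \in S); by rewrite ?eqxx ?orbT.
Qed.

Lemma link_XR S u : S \in states G -> u \in Xset -> link G S u \in Rset.
Proof.
move=> St; have [[l1 l2 l3 l4] [l5 l6 l7 l8]] := linkT St.
rewrite !inE -!orbA => /or4P[]/eqP->; rewrite ?l1 ?l2 ?l3 ?l4 ?l5 ?l6 ?l7 ?l8;
  case: (hx \in S); case: (hq \in S); by rewrite ?eqxx ?orbT.
Qed.

Lemma opp_R u : u \in Rset -> opp G u \in Rset.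
Proof. by rewrite !inE -!orbA => /or4P[]/eqP->; rewrite opps ?eqxx ?orbT. Qed.

Lemma R_a u : u \in Rset -> u \in nmdarts G.
Proof. by rewrite !inE -!orbA => /or4P[]/eqP->; rewrite mats dall. Qed.

Lemma X_a u : u \in Xset -> u \in nmdarts G.
Proof. by rewrite !inE -!orbA => /or4P[]/eqP->; rewrite mats dall. Qed.

Lemma X_nR u : u \in Xset -> u \notin Rset.
Proof. by rewrite !inE -!orbA => /or4P[]/eqP->; rewrite !neqs. Qed.

Lemma inA' d : (d \in nmdarts G') = (d \in nmdarts G) && (d \notin Rset).
Proof.
rewrite !inE /=; casesh d; rwe; rewrite ?neqs ?eqxx ?mats ?dall //=.
by case: (d \in darts G); case: (matched G d).
Qed.

Lemma opp_same u : ~~ matched G u -> opp G' u = opp G u.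
Proof.
move=> um; rewrite /=; case: eqP => [E|_]; first by rewrite E mhx in um.
by case: eqP => [E|_] //; rewrite E mhy in um.
Qed.

Lemma link_same S u : S \in states G -> u \in nmdarts G' -> u \notin Xset ->
  link G' (fS S) u = link G S u.
Proof.
move=> St; rewrite inA' !inE => /andP[/andP[um ud] nR] nX.
have r1 d : rot G u = d -> u = rot G (rot G d) by move=> <-; rewrite rot3.
have r2 d : rot G (rot G u) = d -> u = rot G d by move=> <-; rewrite rot3.
have a1 : (rot G u == hx) = false by apply/negbTE/eqP => /r1 E; rewrite E eqxx ?orbT in nX.
have a2 : (rot G u == hp) = false by apply/negbTE/eqP => /r1 E; rewrite E eqxx ?orbT in nR.
have a3 : (rot G u == hq) = false by apply/negbTE/eqP => /r1 E; rewrite E eqxx ?orbT in nR.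
have a4 : (rot G u == hy) = false by apply/negbTE/eqP => /r1 E; rewrite E eqxx ?orbT in nX.
have b1 : (rot G (rot G u) == hx) = false by apply/negbTE/eqP => /r2 E; rewrite E eqxx ?orbT in nX.
have b2 : (rot G (rot G u) == hp) = false by apply/negbTE/eqP => /r2 E; rewrite E eqxx ?orbT in nR.
have b3 : (rot G (rot G u) == hq) = false by apply/negbTE/eqP => /r2 E; rewrite E eqxx ?orbT in nR.
have b4 : (rot G (rot G u) == hy) = false by apply/negbTE/eqP => /r2 E; rewrite E eqxx ?orbT in nX.
by rewrite /link /= !inE a1 a2 a3 a4 b1 b2 b3 b4 /= ?andbF ?orbF.
Qed.


Definition piS S u := if u \in Rset then link G S u else u.

Lemma nmP d : reflect (d \in darts G /\ ~~ matched G d) (d \in nmdarts G).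
Proof. by rewrite inE; apply: (iffP andP). Qed.

Lemma link_a S u : S \in states G -> u \in nmdarts G -> link G S u \in nmdarts G.
Proof. by move=> St /nmP[ud um]; have [? ? _] := link_facts St ud um; apply/nmP. Qed.
Lemma linkK S u : S \in states G -> u \in nmdarts G -> link G S (link G S u) = u.
Proof. by move=> St /nmP[ud um]; have [_ _ ->] := link_facts St ud um. Qed.
Lemma opp_a u : u \in nmdarts G -> opp G u \in nmdarts G.
Proof. by move=> /nmP[ud um]; apply/nmP; rewrite matched_opp // opp_in. Qed.
Lemma X_a' u : u \in Xset -> u \in nmdarts G'.
Proof. by move=> uX; rewrite inA' X_a // X_nR. Qed.

Lemma curves_eq S : S \in states G -> ncurves G S = ncurves G' (fS S).
Proof.
move=> St; rewrite /ncurves /=; congr addn.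
have St' := L1 St.
apply: (@n_comp_proj _ _ _ _ _ (piS S)).
- exact: sym_connect_sym (curve_sym _ _).
- exact: sym_connect_sym (curve_sym _ _).
- by move=> x y /and3P[-> ->].
- by move=> x y /and3P[-> ->].
- by move=> x; rewrite inA' => /andP[].
- have P u v : u \in nmdarts G -> v \in nmdarts G -> v = opp G u \/ v = link G S u ->
      connect (curve_rel G' (fS S)) (piS S u) (piS S v).
    move=> ua va; rewrite /piS; case uR: (u \in Rset) => -[] E; subst v.
    + rewrite opp_R //; apply: connect1; apply/and3P; split.
      * by apply: X_a'; apply: link_RX.
      * by apply: X_a'; apply: link_RX => //; apply: opp_R.
      * by rewrite KEY ?link_RX // linkK // eqxx ?orbT.
    + by rewrite (negbTE (X_nR (link_RX St uR))).
    + have oR : opp G u \in Rset = false.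
        by apply/negbTE; apply: contraFN uR => /opp_R; rewrite oppK //; case/nmP: ua.
      rewrite oR; apply: connect1; apply/and3P; split.
      * by rewrite inA' ua uR.
      * by rewrite inA' va oR.
      * by rewrite opp_same ?eqxx //; case/nmP: ua.
    + case uX: (u \in Xset).
        by rewrite link_XR // linkK.
      have lR : link G S u \in Rset = false.
        by apply/negbTE; apply: contraFN uX => /(link_RX St); rewrite linkK.
      rewrite lR; apply: connect1; apply/and3P; split.
      * by rewrite inA' ua uR.
      * by rewrite inA' va lR.
      * by rewrite link_same ?uX ?eqxx ?orbT // inA' ua uR.
  move=> u v /and3P[ua va /or4P[]/eqP E].
  + by apply: P => //; left.
  + by rewrite (sym_connect_sym (curve_sym _ _)); apply: P => //; left.
  + by apply: P => //; right.
  + by rewrite (sym_connect_sym (curve_sym _ _)); apply: P => //; right.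
- have Q u v : u \in nmdarts G' -> v \in nmdarts G' -> v = opp G' u \/ v = link G' (fS S) u ->
      connect (curve_rel G S) u v.
    move=> ua' va'; have := ua'; rewrite inA' => /andP[ua uR].
    have := va'; rewrite inA' => /andP[va vR].
    case=> E; subst v.
    + apply: connect1; apply/and3P; split => //.
      by rewrite opp_same ?eqxx //; case/nmP: ua.
    case uX: (u \in Xset); last first.
      have E : link G' (fS S) u = link G S u by rewrite link_same ?uX.
      by rewrite E in va *; apply: connect1; rewrite /curve_rel ua va eqxx ?orbT.
    rewrite KEY //.
    have la := link_a St ua; have ola := opp_a la; have lola := link_a St ola.
    apply: (@connect_trans _ _ (link G S u)); first by apply: connect1; rewrite /curve_rel ua la eqxx ?orbT.
    apply: (@connect_trans _ _ (opp G (link G S u))); first by apply: connect1; rewrite /curve_rel la ola eqxx ?orbT.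
    by apply: connect1; rewrite /curve_rel ola lola eqxx ?orbT.
  move=> u v /and3P[ua va /or4P[]/eqP E].
  + by apply: Q => //; left.
  + by rewrite (sym_connect_sym (curve_sym _ _)); apply: Q => //; left.
  + by apply: Q => //; right.
  + by rewrite (sym_connect_sym (curve_sym _ _)); apply: Q => //; right.
- by move=> x; rewrite inA' /piS => /andP[_ /negbTE ->].
move=> x xa; rewrite /piS; case xR: (x \in Rset).
  split; first by apply: X_a'; apply: link_RX.
  by apply: connect1; rewrite /curve_rel xa link_a // eqxx ?orbT.
by rewrite inA' xa xR.
Qed.

Lemma four_seq : four = [set x in [:: hx; hp; hq; hy]].
Proof. by apply/setP => x; rewrite !inE -!orbA. Qed.
Lemma four_uniq : uniq [:: hx; hp; hq; hy].
Proof. by rewrite /= !inE !neqs. Qed.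

Lemma sign_eq S : S \in states G -> odd (#|S| %/ 2) = odd (#|fS S| %/ 2).
Proof.
move=> St; have [hpS hyS] := statesF St.
have eD : fS S :\: four = S :\: four.
  apply/setP => h; rewrite !inE.
  by case: (h == hx); case: (h == hp); case: (h == hq); case: (h == hy); rewrite /= ?andbF ?orbF.
rewrite -(cardsID four S) -(cardsID four (fS S)) eD four_seq !card_inter ?four_uniq //.
rewrite /= !inE hpS hyS !eqxx ?neqs /= ?andbF ?orbF ?andbT ?orbT.
set n := #|_ :\: _|.
have h4 k : odd ((k.*2 + n) %/ 2) = odd k (+) odd (n %/ 2).
  by rewrite -muln2 divnMDl // oddD.
case: (hx \in S); case: (hq \in S) => /=.
- by change (odd (((2).*2 + n) %/ 2) = odd (((0).*2 + n) %/ 2)); rewrite !h4.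
- by change (odd (((1).*2 + n) %/ 2) = odd (((1).*2 + n) %/ 2)).
- by change (odd (((1).*2 + n) %/ 2) = odd (((1).*2 + n) %/ 2)).
- by [].
Qed.

Local Open Scope ring_scope.
Lemma term_eq S : S \in states G ->
  (- (1 : rat)) ^+ (#|S| %/ 2) * (1 + 1^-1) ^+ ncurves G S =
  (- 1) ^+ (#|fS S| %/ 2) * (1 + 1^-1) ^+ ncurves G' (fS S).
Proof. by move=> St; rewrite curves_eq // -[(-1) ^+ (#|S| %/ 2)]signr_odd sign_eq // signr_odd. Qed.

Lemma partA : bracket2 G (1 : rat) = 2 * bracket2 G' 1.
Proof.
rewrite /bracket2.
rewrite (partition_big (fun S => fS S) (fun S' => S' \in states G')) /=; last by move=> S /L1.
rewrite mulr_sumr; apply: eq_bigr => S' St'.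
have [f1 g1] := L4 true St'; have [f0 g0] := L4 false St'.
rewrite (bigD1 (gS true S')) /=; last by rewrite L2 // f1 eqxx.
rewrite (big_pred1 (gS false S')); last first.
  move=> S; apply/idP/idP.
    case/andP => /andP[St /eqP E] ne; have := L3 St; rewrite E => ESS.
    rewrite -ESS in ne *; case: (hx \in S) ne => /=; by rewrite eqxx.
  rewrite /= => /eqP ->; rewrite L2 // f0 eqxx /=.
  by apply/negP => /eqP E; move: g1; rewrite -E g0.
by rewrite !term_eq ?L2 // f1 f0 mulr2n mulrDl !mul1r.
Qed.
Local Close Scope ring_scope.

Lemma vcount (F : {set H}) h0 : {subset F <= darts G} -> h0 \in darts G ->
  #|[set h' in F | vtx G h' == vtx G h0]| = count (mem F) [:: h0; rot G h0; rot G (rot G h0)].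
Proof.
move=> sF hd.
have -> : [set h' in F | vtx G h' == vtx G h0] = F :&: [set x in [:: h0; rot G h0; rot G (rot G h0)]].
  apply/setP => x; rewrite !inE; case xF: (x \in F) => //=.
  apply/eqP/idP.
    by case/(at_vertex hd (sF _ xF)) => ->; rewrite eqxx ?orbT.
  by case/or3P => /eqP->; rewrite ?vtx_rot ?rot_in.
rewrite (@card_inter H F [:: h0; rot G h0; rot G (rot G h0)]) //= !inE negb_or.
by rewrite eq_sym rot_neq // eq_sym rot2_neq // eq_sym rot21_neq.
Qed.

Definition f2 (F : {set H}) := [set h | (h \in F) &&
  ~~ [|| h == hp, h == pa, h == pb, h == hq, h == qa | h == qb]].
Definition g2 (b : bool) (F : {set H}) := [set h | [|| h \in F, h == hp, h == hq,
  b && ((h == pa) || (h == qb)) | ~~ b && ((h == pb) || (h == qa))]].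

Lemma tfF F : F \in twofactors G ->
  [/\ hp \in F, hq \in F, hx \in F & hy \in F] /\
  [/\ (qb \in F) = (pa \in F), (pb \in F) = ~~ (pa \in F) & (qa \in F) = ~~ (pa \in F)].
Proof.
case/tfP => sF cF mF kF.
have i1 : hp \in F by apply: mF; rewrite ?mats.
have i2 : hq \in F by apply: mF; rewrite ?mats.
have i3 : hx \in F by apply: mF; rewrite ?mats.
have i4 : hy \in F by apply: mF; rewrite ?mats.
split => //.
have kp := kF _ dhp; rewrite vcount //= i1 in kp.
have kq := kF _ dhq; rewrite vcount //= i2 in kq.
have e1 : (qb \in F) = (pa \in F).
  by apply/idP/idP => /cF; rewrite opps.
have e2 : (qa \in F) = (pb \in F).
  by apply/idP/idP => /cF; rewrite opps.
have e3 : (pb \in F) = ~~ (pa \in F).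
  by move: kp; case: (pa \in F); case: (pb \in F).
by split => //; rewrite e2.
Qed.

Definition six h := [|| h == hp, h == pa, h == pb, h == hq, h == qa | h == qb].

Lemma six_rot h : h \in darts G -> ~~ six h -> ~~ six (rot G h) /\ ~~ six (rot G (rot G h)).
Proof.
move=> hd nh.
have r1 d : rot G h = d -> h = rot G (rot G d) by move=> <-; rewrite rot3.
have r2 d : rot G (rot G h) = d -> h = rot G d by move=> <-; rewrite rot3.
split; apply: contra nh; rewrite /six => /orP[|/orP[|/orP[|/orP[|/orP[]]]]] /eqP.
all: first [move/r1 | move/r2] => ->; rewrite ?opps ?eqxx ?orbT //.
Qed.

Lemma dartsG' h : (h \in darts G') = (h \in darts G) && ~~ six h.
Proof. by rewrite /= !inE /six -!orbA andbC. Qed.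

Lemma M1 F : F \in twofactors G -> f2 F \in twofactors G'.
Proof.
move=> Ft; have [[i1 i2 i3 i4] [j1 j2 j3]] := tfF Ft.
case/tfP: Ft => sF cF mF kF.
have f2E h : (h \in f2 F) = (h \in F) && ~~ six h by rewrite inE.
apply/tfP; split.
- by move=> h; rewrite f2E dartsG' => /andP[/sF -> ->].
- move=> h; rewrite f2E /= => /andP[hF n6].
  have hd := sF _ hF.
  { move: hF n6 hd; casesh h; last first.
      by rwe; move=> hF _ hd; rewrite /= f2E cF // /six !opp_eq // ?opps; rwe.
    all: move=> ? N6 ?; move: N6; rewrite /six ?neqs ?eqxx ?orbT /= => // _; rewrite ?eqxx ?neqs f2E /six ?opps ?neqs ?eqxx /= ?i1 ?i2 ?i3 ?i4 //.
    all: by rewrite cF // !opp_eq // ?opps ?neqs. }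
- by move=> h; rewrite dartsG' => /andP[hd n6] hm; rewrite f2E mF.
move=> h; rewrite dartsG' => /andP[hd n6].
have sf2 : {subset f2 F <= darts G} by move=> x; rewrite f2E => /andP[/sF].
rewrite /= (vcount sf2 hd) -(kF _ hd) (vcount sF hd) /= !f2E.
by have [-> ->] := six_rot hd n6; rewrite n6 !andbT.
Qed.

Lemma g2_nsix b F d : ~~ six d -> (d \in g2 b F) = (d \in F).
Proof.
rewrite /six inE => /norP[/negbTE-> /norP[/negbTE-> /norP[/negbTE-> /norP[/negbTE-> /norP[/negbTE-> /negbTE->]]]]].
by rewrite !andbF !orbF.
Qed.

Lemma six_cases h : six h -> [\/ h = hp, h = pa, h = pb | [\/ h = hq, h = qa | h = qb]].
Proof.
rewrite /six => /orP[|/orP[|/orP[|/orP[|/orP[]]]]] /eqP ->.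
- by constructor 1.
- by constructor 2.
- by constructor 3.
- by constructor 4; constructor 1.
- by constructor 4; constructor 2.
- by constructor 4; constructor 3.
Qed.

Lemma tfF' F : F \in twofactors G' ->
  [/\ forall d, six d -> d \in F = false, hx \in F & hy \in F].
Proof.
case/tfP => sF cF mF kF; split.
- by move=> d sd; apply/negP => /sF; rewrite dartsG' sd andbF.
- by apply: mF; rewrite ?dartsG' ?dhx /six ?neqs ?mats.
- by apply: mF; rewrite ?dartsG' ?dhy /six ?neqs ?mats.
Qed.

Lemma M2 b F : F \in twofactors G' -> g2 b F \in twofactors G.
Proof.
move=> Ft; have [nF ix iy] := tfF' Ft.
have nFs : ((hp \in F) = false) * ((pa \in F) = false) * ((pb \in F) = false) *
   ((hq \in F) = false) * ((qa \in F) = false) * ((qb \in F) = false).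
  by do ! split; apply: nF; rewrite /six eqxx ?orbT.
case/tfP: Ft => sF cF mF kF.
have sFG : {subset F <= darts G} by move=> x /sF; rewrite dartsG' => /andP[].
have g2E h : (h \in g2 b F) = [|| h \in F, h == hp, h == hq,
  b && ((h == pa) || (h == qb)) | ~~ b && ((h == pb) || (h == qa))] by rewrite inE.
have sg2 : {subset g2 b F <= darts G}.
  move=> h; rewrite g2E => /orP[/sFG //|/orP[/eqP->|/orP[/eqP->|/orP[/andP[_ /orP[]/eqP->]|/andP[_ /orP[]/eqP->]]]]] //.
apply/tfP; split => //.
- move=> h hg; have hd := sg2 _ hg.
  case sh: (six h).
    case/six_cases: sh hg => [|||[||]] ->; rewrite ?opps !g2E ?nFs ?eqxx ?neqs ?ix ?iy ?orbT //=;
      by clear g2E sg2; case: b.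
  rewrite g2_nsix ?sh // in hg *.
  have := cF _ hg; rewrite /=.
  case: eqP => [->|_]; first by rewrite /= ?opps g2E eqxx ?orbT.
  case: eqP => [->|_]; first by rewrite /= ?opps g2E eqxx ?orbT.
  move=> oF; move: (oF) => /sF; rewrite dartsG' => /andP[_ os].
  by rewrite g2_nsix.
- move=> h hd hm; case sh: (six h).
    by case/six_cases: sh hm => [|||[||]] ->; rewrite ?mats // => _; rewrite g2E eqxx ?orbT.
  by rewrite g2_nsix ?sh //; apply: mF; rewrite // dartsG' hd sh.
move=> h hd; rewrite (vcount sg2 hd).
case sh: (six h); last first.
  have [r1 r2] := six_rot hd (negbT sh).
  rewrite /= !g2_nsix ?sh //.
  have hd' : h \in darts G' by rewrite dartsG' hd sh.
  by have := kF _ hd'; rewrite /= (vcount sFG hd).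
case/six_cases: sh => [|||[||]] ->; rewrite /= ?opps !g2E ?nFs ?eqxx ?neqs ?orbT /=;
  by clear g2E sg2; case: b.
Qed.

Lemma M3 F : F \in twofactors G -> g2 (pa \in F) (f2 F) = F.
Proof.
move=> Ft; have [[i1 i2 i3 i4] [j1 j2 j3]] := tfF Ft.
apply/setP => h; case sh: (six h); last by rewrite g2_nsix ?sh // inE; move: sh; rewrite /six => ->; rewrite andbT.
case/six_cases: sh => [|||[||]] ->; rewrite !inE /six ?eqxx ?orbT ?andbF ?neqs /= ?i1 ?i2 ?j1 ?j2 ?j3 //.
all: by case: (pa \in F).
Qed.

Lemma M4 b F : F \in twofactors G' -> f2 (g2 b F) = F /\ (pa \in g2 b F) = b.
Proof.
move=> Ft; have [nF ix iy] := tfF' Ft.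
split; last first.
  by rewrite inE (nF pa) /six ?eqxx ?orbT // ?neqs /= ?andbT ?andbF ?orbF; case: b.
apply/setP => h; rewrite [in LHS]inE -/(six h); case sh: (six h); last by rewrite g2_nsix ?sh ?andbT.
by rewrite nF ?andbF.
Qed.

Lemma partB : n2f G = (2 * n2f G')%N.
Proof.
rewrite /n2f -!sum1_card.
rewrite (partition_big (fun F => f2 F) (fun F' => F' \in twofactors G')) /=; last by move=> F /M1.
rewrite big_distrr /=; apply: eq_bigr => F' Ft'.
have [f1 g1] := M4 true Ft'; have [f0 g0] := M4 false Ft'.
rewrite (bigD1 (g2 true F')) /=; last by rewrite M2 // f1 eqxx.
rewrite (big_pred1 (g2 false F')) //.
move=> F; apply/idP/idP.
  case/andP => /andP[Ft /eqP E] ne; have := M3 Ft; rewrite E => ESS.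
  rewrite -ESS in ne *; case: (pa \in F) ne => /=; by rewrite eqxx.
rewrite /= => /eqP ->; rewrite M2 // f0 eqxx /=.
by apply/negP => /eqP E; move: g1; rewrite -E g0.
Qed.

End Basic.

Theorem lemma2p4 :
  (forall (H V : finType) (G : pmd H V) (hx hq : H),
     pmd_wf G -> bigon_config G hx hq ->
     bracket2 G (1 : rat) = (2 * bracket2 (replace_bigon G hx hq) (1 : rat))%R)
  /\
  (forall (H V : finType) (G : pmd H V) (hx hq : H),
     pmd_wf G -> loops G = 0%N -> plane G -> bigon_config G hx hq ->
     n2f G = (2 * n2f (replace_bigon G hx hq))%N).
Proof.
split.
- by move=> H V G hx hq wf cfg; apply: partA.
- by move=> H V G hx hq wf _ _ cfg; apply: partB.
Qed.
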